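(* Let $n\geq2$ and define $\tilde f:[2,\infty)\to\mathbb{R}$ by \[ \tilde f(x)=\frac{n+1-2x-x(x+n-2)+\frac1n(x^2-x)}{n-1-x(x+n-2)}. \] If $\bar x\geq2$ satisfies $\tilde f'(\bar x)=0$, then $\tilde f''(\bar x)<0$; i.e. every critical point of $\tilde f$ in $[2,\infty)$ is a strict local maximum. *)

(* Defs.v *)
From Stdlib Require Import Reals Lra Lia.
From Coquelicot Require Import Coquelicot.
Open Scope R_scope.

(* \tilde f(x) = (n+1-2x - x(x+n-2) + (x^2-x)/n) / (n-1 - x(x+n-2)),
   given by its closed formula on all of R (its denominator is < 0 on [2,oo)). *)
Definition ftilde (n : nat) (x : R) : R :=
  (INR n + 1 - 2 * x - x * (x + INR n - 2) + / INR n * (x ^ 2 - x))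
  / (INR n - 1 - x * (x + INR n - 2)).

(* Main.v *)
Require Import Defs.
From Stdlib Require Import Reals Lra Lia.
From Coquelicot Require Import Coquelicot.
Open Scope R_scope.

Section S.
Variable a : R.
Definition Nf y := a + 1 - 2 * y - y * (y + a - 2) + / a * (y ^ 2 - y).
Definition Df y := a - 1 - y * (y + a - 2).
Definition N1 y := -2 - (2 * y + a - 2) + / a * (2 * y - 1).
Definition D1 y := -(2 * y + a - 2).
Definition P y := N1 y * Df y - Nf y * D1 y.
Definition g y := P y / (Df y ^ 2).
Definition P1 y := (-2 + 2 / a) * Df y - Nf y * (-2).
Definition h y := P1 y / (Df y ^ 2) - 2 * P y * D1 y / (Df y ^ 3).
End S.

Lemma Dneg a y : 2 <= a -> 1 < y -> Df a y < 0.
Proof. intros; unfold Df; nra. Qed.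

Lemma d1 n y : 2 <= INR n -> 1 < y -> is_derive (ftilde n) y (g (INR n) y).
Proof.
  intros Ha Hy. pose proof (Dneg _ _ Ha Hy) as HD. unfold Df in HD.
  unfold ftilde. auto_derive.
  - lra.
  - unfold g, P, N1, Df, Nf, D1. field. split; lra.
Qed.

Lemma d2 a y : 2 <= a -> 1 < y -> is_derive (g a) y (h a y).
Proof.
  intros Ha Hy. pose proof (Dneg _ _ Ha Hy) as HD. unfold Df in HD.
  unfold g, h, P, P1, N1, Df, Nf, D1. auto_derive.
  - rewrite Rmult_1_r; apply Rmult_integral_contrapositive_currified; lra.
  - field. split; lra.
Qed.

Theorem lemma4p1 (n : nat) (xbar : R) :
  (2 <= n)%nat -> 2 <= xbar ->
  Derive (ftilde n) xbar = 0 ->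
  Derive_n (ftilde n) 2 xbar < 0.
Proof.
  intros Hn Hx Hd.
  assert (Ha : 2 <= INR n) by (apply le_INR in Hn; simpl in Hn; lra).
  set (a := INR n) in *.

  assert (E : Derive (Derive (ftilde n)) xbar = Derive (g a) xbar).
  { apply Derive_ext_loc.
    assert (Hp : 0 < xbar - 1) by lra.
    exists (mkposreal _ Hp). intros y Hy.
    unfold ball in Hy; simpl in Hy; unfold AbsRing_ball, abs, minus, plus, opp in Hy; simpl in Hy.
    apply is_derive_unique. apply d1; [exact Ha|].
    apply Rabs_lt_between in Hy. lra. }
  change (Derive (Derive (ftilde n)) xbar < 0). rewrite E.
  rewrite (is_derive_unique _ _ _ (d1 n xbar Ha ltac:(lra))) in Hd.
  fold a in Hd.
  pose proof (Dneg _ _ Ha (ltac:(lra) : 1 < xbar)) as HD.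
  assert (HP : P a xbar = 0).
  { unfold g in Hd. apply Rmult_integral in Hd. destruct Hd as [H|H]; [exact H|].
    exfalso. apply Rinv_neq_0_compat in H; auto. apply pow_nonzero; lra. }
  rewrite (is_derive_unique _ _ _ (d2 a xbar Ha ltac:(lra))). unfold h. rewrite HP.
  assert (HP1 : P1 a xbar = 2 * (3 - / a) * (1 - xbar)).
  { unfold P1, Df, Nf. field. lra. }
  rewrite HP1.
  assert (Hb : / a <= / 2) by (apply Rinv_le_contravar; lra).
  assert (HDs : 0 < Df a xbar ^ 2) by (simpl; nra).
  replace (2 * 0 * D1 a xbar / Df a xbar ^ 3) with 0 by (field; lra).
  rewrite Rminus_0_r. apply Rdiv_neg_pos; [|exact HDs]. nra.
Qed.
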